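(* There is an absolute constant $c>0$ such that for every $m\ge2$ there is a parallel-machine scheduling market instance with $m$ machines, $n=O(m\log m)$ jobs, a makespan bound $T$ and a preference profile $\succ$ such that for every $\beta>0$, every schedule $\sigma$ of makespan at most $\beta T$ has rank-approximation factor at least $c\cdot\max\{\log m,\log n\}/\beta$, i.e. there is some $r$ with $\mathrm{rank}_r(\sigma;\succ)\le \beta\,\mathrm{maxrank}_r(\succ)/(c\max\{\log m,\log n\})$.
   Context: Parallel-machine scheduling market: $n$ jobs and $m$ machines; job $j$ has processing time $p_j$ (same on every machine) and a strict total order $\succ_j$ on the machines; there is a makespan bound $T$. A schedule is a partial assignment of jobs to machines; its makespan is the maximum over machines of the total processing time assigned. $\mathrm{rank}_r(\sigma;\succ)$ is the number of jobs assigned by $\sigma$ to one of their top-$r$ machines; $\mathrm{maxrank}_r(\succ)$ is the maximum of $\mathrm{rank}_r$ over schedules with makespan at most $T$. A schedule $\sigma$ has rank-approximation factor $\alpha$ if $\mathrm{rank}_r(\sigma;\succ)\ge\mathrm{maxrank}_r(\succ)/\alpha$ for all $r$. *)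

(* Defs.v *)
From HB Require Import structures.
From mathcomp Require Import all_boot all_order all_algebra all_fingroup.
From mathcomp Require Import reals exp.
Set Implicit Arguments. Unset Strict Implicit. Unset Printing Implicit Defensive.
Import Order.TTheory GRing.Theory Num.Theory.
Local Open Scope ring_scope.

(* Jobs are 'I_n, machines are 'I_m.  A schedule is a partial assignment
   of jobs to machines (None = job unassigned). *)
Definition schedule (n m : nat) := {ffun 'I_n -> option 'I_m}.

Definition load (R : realType) (n m : nat) (p : 'I_n -> R)
  (s : schedule n m) (i : 'I_m) : R :=
  \sum_(j | s j == Some i) p j.

(* Makespan = maximum load over machines (0 if there are no machines). *)
Definition makespan (R : realType) (n m : nat) (p : 'I_n -> R)
  (s : schedule n m) : R :=
  \big[Num.max/0]_(i : 'I_m) load p s i.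

(* Preferences: the strict total order of job j on machines is given by the
   permutation pref j, where (pref j) k is job j's (k+1)-th favourite machine. *)
Definition in_top (n m : nat) (pref : 'I_n -> {perm 'I_m}) (r : nat)
  (j : 'I_n) (i : 'I_m) : bool :=
  (((pref j)^-1)%g i < r)%N.

Definition rank (n m : nat) (pref : 'I_n -> {perm 'I_m}) (r : nat)
  (s : schedule n m) : nat :=
  #|[set j | if s j is Some i then in_top pref r j i else false]|.

Definition maxrank (R : realType) (n m : nat) (p : 'I_n -> R) (T : R)
  (pref : 'I_n -> {perm 'I_m}) (r : nat) : nat :=
  \max_(s : schedule n m | makespan p s <= T) rank pref r s.

Definition rank_approx (R : realType) (n m : nat) (p : 'I_n -> R) (T : R)
  (pref : 'I_n -> {perm 'I_m}) (s : schedule n m) (alpha : R) : Prop :=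
  forall r : nat, (maxrank p T pref r)%:R / alpha <= (rank pref r s)%:R.

(* Main.v *)
Require Import Defs.
From HB Require Import structures.
From mathcomp Require Import all_boot all_order all_algebra all_fingroup.
From mathcomp Require Import reals exp.
From mathcomp Require Import zify ring lra.
Import Order.TTheory GRing.Theory Num.Theory.

Module Aux.
Set Implicit Arguments. Unset Strict Implicit. Unset Printing Implicit Defensive.
Lemma sum_mulE a c (F : nat -> nat) :
  \sum_(0 <= j < a * c) F j = \sum_(0 <= x < a) \sum_(0 <= y < c) F (x * c + y).
Proof.
elim: a => [|a IH]; first by rewrite mul0n !big_geq.
rewrite mulSn addnC (big_cat_nat _ (n := a * c)) //=; last by rewrite leq_addr.
rewrite IH big_nat_recr //=; congr (_ + _).
rewrite -{1}(add0n (a * c)) big_addn addKn.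
by apply: eq_bigr => y _; rewrite addnC.
Qed.

Lemma G_eq L p :
  \sum_(0 <= r < L) 2 ^ (L - 1 - r) * (p <= r) = 2 ^ (L - p) - 1.
Proof.
elim: L => [|L IH]; first by rewrite big_geq.
rewrite big_nat_recr //=.
have -> : L.+1 - 1 - L = 0 by lia.
rewrite expn0 mul1n.
have -> : \sum_(0 <= r < L) 2 ^ (L.+1 - 1 - r) * (p <= r)
        = 2 * \sum_(0 <= r < L) 2 ^ (L - 1 - r) * (p <= r).
  rewrite big_distrr /= big_nat_cond [RHS]big_nat_cond.
  apply: eq_bigr => r /andP[/andP[_ rL] _].
  have -> : L.+1 - 1 - r = (L - 1 - r).+1 by lia.
  by rewrite expnS mulnA.
rewrite IH.
case: (leqP p L) => pL.
  have -> : L.+1 - p = (L - p).+1 by lia.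
  rewrite expnS /=.
  have : 0 < 2 ^ (L - p) by rewrite expn_gt0.
  move: (2 ^ (L - p)) => x; clear IH; lia.
have -> : L - p = 0 by lia.
have -> : L.+1 - p = 0 by lia.
by [].
Qed.

Lemma S_bound L K :
  \sum_(0 <= i < K) 2 ^ (L - i) + 2 ^ (L.+1 - K) <= 2 ^ L.+1 + K.
Proof.
elim: K => [|K IH]; first by rewrite big_geq // subn0 add0n addn0.
rewrite big_nat_recr //=.
case: (leqP K L) => KL.
  have -> : L.+1 - K.+1 = L - K by lia.
  move: IH; have -> : L.+1 - K = (L - K).+1 by lia.
  rewrite expnS. move: (2 ^ (L - K)) (\sum_(0 <= i < K) 2 ^ (L - i)) => x s. lia.
have -> : L.+1 - K.+1 = 0 by lia.
have -> : L - K = 0 by lia.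
move: IH; have -> : L.+1 - K = 0 by lia.
rewrite expn0. move: (\sum_(0 <= i < K) 2 ^ (L - i)) => s. lia.
Qed.

Definition hh L := 2 ^ (L - 1).
Definition XX L := hh L * hh L.
Definition lev L (j : nat) := j %/ XX L.
Definition ddd L (j : nat) := (j %% XX L) %/ hh L.
Definition uuu L (j : nat) := (j %% XX L) %% hh L.

Lemma hh_gt0 L : 0 < hh L. Proof. by rewrite expn_gt0. Qed.
Lemma XX_gt0 L : 0 < XX L. Proof. by rewrite muln_gt0 hh_gt0. Qed.

Lemma decompE L k d u : d < hh L -> u < hh L ->
  [/\ lev L (k * XX L + (d * hh L + u)) = k,
      ddd L (k * XX L + (d * hh L + u)) = d &
      uuu L (k * XX L + (d * hh L + u)) = u].
Proof.
move=> dh uh.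
have tX : d * hh L + u < XX L.
  rewrite /XX. have := hh_gt0 L. move: (hh L) dh uh => H. nia.
rewrite /lev /ddd /uuu divnMDl ?XX_gt0 // (divn_small tX) addn0.
rewrite modnMDl (modn_small tX) divnMDl ?hh_gt0 // (divn_small uh) addn0.
by rewrite modnMDl (modn_small uh).
Qed.

Lemma lev_lt L j : j < L * XX L -> lev L j < L.
Proof. by move=> jn; rewrite /lev ltn_divLR ?XX_gt0. Qed.

Lemma ddd_lt L j : ddd L j < hh L.
Proof.
rewrite /ddd ltn_divLR ?hh_gt0 //.
by rewrite -/(XX L) ltn_mod XX_gt0.
Qed.

Lemma uuu_lt L j : uuu L j < hh L.
Proof. by rewrite /uuu ltn_mod hh_gt0. Qed.

Lemma sum3E L (F : nat -> nat) :
  \sum_(0 <= j < L * XX L) F j =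
  \sum_(0 <= k < L) \sum_(0 <= d < hh L) \sum_(0 <= u < hh L)
      F (k * XX L + (d * hh L + u)).
Proof.
rewrite sum_mulE; apply: eq_bigr => k _.
by rewrite /XX sum_mulE.
Qed.

Lemma sum_eq1 L h x : \sum_(0 <= d < h) (L + d == x) = ((L <= x) && (x < L + h)).
Proof.
elim: h => [|h IH]; first by rewrite big_geq //= addn0; case: leqP => //= Lx; rewrite ltnNge Lx.
rewrite big_nat_recr //= IH.
case: (eqVneq (L + h) x) => [<-|ne] /=.
  by rewrite leq_addr ltnn /= [L + h.+1]addnS ltnS leqnn.
rewrite addn0 [L + h.+1]addnS ltnS [x <= _]leq_eqVlt (eq_sym x) (negbTE ne).
by [].
Qed.

Definition Pn L (j : nat) := 2 ^ (L - 1 - lev L j).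
Definition psz (R : realType) L n : 'I_n -> R := fun j => (Pn L j)%:R%R.
Definition prf L m' n : 'I_n -> {perm 'I_m'.+1} :=
  fun j => tperm (inord (L + ddd L j)) (inord (lev L j)).
Definition wit L m' n k0 : schedule n m'.+1 :=
  [ffun j : 'I_n => if (lev L j == k0) && (uuu L j < 2 ^ k0)
                    then Some (inord (L + ddd L j)) else None].

Lemma card_sumE n (P : pred 'I_n) : #|[set j | P j]| = \sum_(j < n) P j.
Proof. by rewrite -sum1_card big_mkcond /=; apply: eq_bigr => j _; rewrite inE; case: (P j). Qed.

Lemma sum_lt h c : \sum_(0 <= u < h) (u < c) = minn c h.
Proof.
elim: h => [|h IH]; first by rewrite big_geq // minn0.
rewrite big_nat_recr //= IH.
case: (ltnP h c) => hc /=; lia.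
Qed.

Lemma sum_ordE n (f : nat -> nat) : \sum_(j < n) f j = \sum_(0 <= j < n) f j.
Proof. by rewrite big_mkord. Qed.

Lemma load_nat (R : realType) L n m (s : schedule n m) i :
  load (psz R L (n:=n)) s i = ((\sum_(j < n | s j == Some i) Pn L j)%:R)%R.
Proof. by rewrite /load natr_sum. Qed.

Lemma sum_eq1' h x : \sum_(0 <= d < h) (d == x) = (x < h).
Proof.
by have := sum_eq1 0 h x; rewrite add0n => <-; apply: eq_bigr => d _; rewrite add0n.
Qed.

Section A.
Variables (R : realType) (L m' : nat).
Hypotheses (L0 : 0 < L) (Lm : L + hh L <= m'.+1).
Let n := L * XX L.

Lemma mach_val j : nat_of_ord (inord (L + ddd L j) : 'I_m'.+1) = L + ddd L j.
Proof. rewrite inordK //; apply: leq_trans Lm; by rewrite ltn_add2l ddd_lt. Qed.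

Lemma lev_val (j : 'I_n) : nat_of_ord (inord (lev L j) : 'I_m'.+1) = lev L j.
Proof.
rewrite inordK //; apply: leq_trans Lm; apply: leq_trans (leq_addr _ _).
exact: lev_lt.
Qed.

Lemma pow_le_hh k0 : k0 < L -> 2 ^ k0 <= hh L.
Proof. by move=> kL; rewrite /hh leq_pexp2l //; lia. Qed.

Lemma wit_load k0 (i : 'I_m'.+1) : k0 < L ->
  \sum_(j < n | wit L m' n k0 j == Some i) Pn L j <= hh L.
Proof.
move=> kL.
rewrite big_mkcond /=.
rewrite (eq_bigr (fun j : 'I_n => ((lev L j == k0) && (uuu L j < 2 ^ k0)
            && (L + ddd L j == val i)) * Pn L j)); last first.
  move=> j _; rewrite /wit ffunE.
  case: (boolP ((lev L j == k0) && (uuu L j < 2 ^ k0))) => C; last by [].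
  rewrite /=.
  case: (eqVneq (L + ddd L j) (val i)) => [E|E].
    have -> : (inord (L + ddd L j) : 'I_m'.+1) = i by apply: val_inj; rewrite /= mach_val.
    by rewrite eqxx /= mul1n.
  rewrite ifF //; apply/eqP => [[E2]]; move: E; rewrite -E2 /= mach_val eqxx //.
rewrite (@sum_ordE n (fun j => ((lev L j == k0) && (uuu L j < 2 ^ k0)
            && (L + ddd L j == val i)) * Pn L j)) /n sum3E.
rewrite (eq_bigr (fun k => (k == k0) * \sum_(0 <= d < hh L) ((L + d == val i) *
            (\sum_(0 <= u < hh L) (u < 2 ^ k0) * 2 ^ (L - 1 - k0))))); last first.
  move=> k _; rewrite big_distrr /=; apply: eq_big_nat => d /andP[_ dh].
  rewrite big_distrr /= big_distrr /=; apply: eq_big_nat => u /andP[_ uh].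
  have [E1 E2 E3] := decompE k dh uh.
  rewrite /Pn E1 E2 E3.
  case: eqVneq => [->|_]; rewrite /= ?mul0n //; case: (u < 2 ^ k0); case: (L + d == val i); by rewrite /= ?mul0n ?mul1n ?muln0.
rewrite -big_distrl /= -big_distrl /= -big_distrl /= sum_lt (minn_idPl (pow_le_hh kL)).
rewrite sum_eq1' sum_eq1 kL mul1n -expnD.
have -> : k0 + (L - 1 - k0) = L - 1 by lia.
rewrite -/(hh L); case: (_ && _) => //=; by rewrite ?mul1n ?mul0n.
Qed.

Lemma wit_makespan k0 : k0 < L ->
  (makespan (psz R L (n:=n)) (@wit L m' n k0) <= (hh L)%:R)%R.
Proof.
move=> kL; rewrite /makespan; apply: bigmax_le => [|i _]; first exact: ler0n.
by rewrite load_nat ler_nat; exact: wit_load.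
Qed.

Lemma wit_rank k0 : k0 < L -> hh L * 2 ^ k0 <= rank (@prf L m' n) k0.+1 (@wit L m' n k0).
Proof.
move=> kL; rewrite /rank card_sumE.
apply: (@leq_trans (\sum_(j < n) ((lev L j == k0) && (uuu L j < 2 ^ k0)))).
  rewrite (@sum_ordE n (fun j => ((lev L j == k0) && (uuu L j < 2 ^ k0)) : nat)) /n sum3E.
  rewrite (eq_bigr (fun k => (k == k0) * \sum_(0 <= d < hh L) \sum_(0 <= u < hh L) (u < 2 ^ k0))); last first.
    move=> k _; rewrite big_distrr /=; apply: eq_big_nat => d /andP[_ dh].
    rewrite big_distrr /=; apply: eq_big_nat => u /andP[_ uh].
    have [E1 E2 E3] := decompE k dh uh.
    rewrite E1 E3. by case: eqP; rewrite /= ?mul1n ?mul0n.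
  rewrite -big_distrl /= sum_eq1' kL mul1n.
  rewrite (eq_bigr (fun d => 2 ^ k0)); last by move=> d _; rewrite sum_lt (minn_idPl (pow_le_hh kL)).
  by rewrite sum_nat_const_nat subn0.
apply: leq_sum => j _.
case: (boolP ((lev L j == k0) && (uuu L j < 2 ^ k0))) => C //=.
rewrite /wit ffunE C /in_top /prf tpermV tpermL lev_val.
case/andP: C => /eqP E _; by rewrite E ltnSn.
Qed.

Lemma maxrank_lb k0 : k0 < L ->
  hh L * 2 ^ k0 <= maxrank (psz R L (n:=n)) (hh L)%:R (@prf L m' n) k0.+1.
Proof.
move=> kL; apply: (leq_trans (wit_rank kL)).
rewrite /maxrank; exact: (leq_bigmax_cond _ (wit_makespan kL)).
Qed.
End A.

Definition phi L (i : nat) := (i < L + hh L) * (2 ^ (L - i) + 2).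

Section B.
Variables (L m' : nat).
Hypotheses (L0 : 0 < L) (Lm : L + hh L <= m'.+1).
Let n := L * XX L.

Lemma pos_bound (j : 'I_n) (i : 'I_m'.+1) :
  2 ^ (L - ((@prf L m' n j)^-1)%g i) - 1 <= phi L i * Pn L j.
Proof.
have jL : lev L j < L by apply: lev_lt; exact: ltn_ord.
have P1 : 0 < Pn L j by rewrite expn_gt0.
rewrite /prf tpermV.
case: (eqVneq i (inord (L + ddd L j))) => [->|nia].
  rewrite tpermL lev_val // /phi mach_val // ltn_add2l ddd_lt mul1n /Pn.
  have -> : L - lev L j = (L - 1 - lev L j).+1 by lia.
  rewrite expnS mulnDl. move: (2 ^ (L - 1 - lev L j)) => x. 
  move: (2 ^ (L - (L + ddd L j))) => y. nia.
case: (eqVneq i (inord (lev L j))) => [->|nic].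
  rewrite tpermR mach_val //.
  have -> : L - (L + ddd L j) = 0 by lia.
  by [].
rewrite tpermD; last 2 first.
- by rewrite eq_sym.
- by rewrite eq_sym.
rewrite /phi; case: ltnP => iL /=.
  rewrite mul1n; move: (2 ^ (L - i)) => x. move: P1; move: (Pn L j) => y. nia.
have -> : L - i = 0 by lia.
by [].
Qed.

Lemma W_bound (s : schedule n m'.+1) :
  \sum_(0 <= r < L) 2 ^ (L - 1 - r) * rank (@prf L m' n) r.+1 s
  <= \sum_(i < m'.+1) phi L i * \sum_(j < n | s j == Some i) Pn L j.
Proof.
rewrite /rank.
rewrite (eq_bigr (fun r => \sum_(j < n) 2 ^ (L - 1 - r) *
   ((if s j is Some i then in_top (@prf L m' n) r.+1 j i else false) : bool))); last first.
  by move=> r _; rewrite (@card_sumE n (fun j => if s j is Some i then in_top (@prf L m' n) r.+1 j i else false)) big_distrr.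
rewrite exchange_big /=.
rewrite (eq_bigr (fun i : 'I_m'.+1 => \sum_(j < n) (s j == Some i) * (phi L i * Pn L j))); last first.
  move=> i _; rewrite big_distrr /= big_mkcond /=; apply: eq_bigr => j _.
  by case: (s j == Some i); rewrite ?mul1n ?mul0n.
rewrite [X in _ <= X]exchange_big /=.
apply: leq_sum => j _.
case E: (s j) => [i0|]; last first.
  by rewrite big1 // => r _; rewrite muln0.
rewrite /in_top.
rewrite (eq_bigr (fun r => 2 ^ (L - 1 - r) * (((@prf L m' n j)^-1)%g i0 <= r))); last first.
  by move=> r _; rewrite ltnS.
rewrite G_eq (bigD1 i0) //= eqxx mul1n big1 ?addn0; first exact: pos_bound.
move=> i /negbTE ne; suff -> : (Some i0 == Some i) = false by [].
by apply/eqP => [[E2]]; move: ne; rewrite E2 eqxx.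
Qed.
End B.

Lemma L_le_hh L : 0 < L -> L <= hh L.
Proof. move=> L0; have := @ltn_expl 2 (L - 1) isT; rewrite /hh; lia. Qed.

Lemma hh_le_XX L : hh L <= XX L.
Proof. by rewrite /XX leq_pmulr ?hh_gt0. Qed.

Lemma Phi_bound L m' : 0 < L -> L + hh L <= m'.+1 ->
  \sum_(i < m'.+1) phi L i <= 10 * hh L.
Proof.
move=> L0 Lm.
rewrite (@sum_ordE m'.+1 (phi L)) (big_cat_nat _ (n := L + hh L)) //=.
rewrite [X in _ + X <= _]big_nat_cond [X in _ + X <= _]big1 ?addn0; last first.
  move=> i /andP[/andP[Li _] _]; by rewrite /phi ltnNge Li.
rewrite (eq_big_nat _ _ (F2 := fun i => 2 ^ (L - i) + 2)); last first.
  by move=> i /andP[_ iL]; rewrite /phi iL mul1n.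
rewrite big_split /= sum_nat_const_nat subn0.
have := S_bound L (L + hh L).
have -> : 2 ^ L.+1 = 4 * hh L.
  rewrite /hh -(@expnD 2 2); congr (2 ^ _); lia.
have := L_le_hh L0.
move: (\sum_(0 <= i < L + hh L) 2 ^ (L - i)) (2 ^ (L.+1 - (L + hh L))) (hh L) => x y h.
lia.
Qed.

Lemma sum_LXX L : \sum_(0 <= r < L) 2 ^ (L - 1 - r) * (hh L * 2 ^ r) = L * XX L.
Proof.
rewrite (eq_big_nat _ _ (F2 := fun _ => XX L)); last first.
  move=> r /andP[_ rL]; rewrite /XX /hh mulnCA -expnD.
  by have -> : L - 1 - r + r = L - 1 by lia.
by rewrite sum_nat_const_nat subn0.
Qed.


Lemma XXS L : (0 < L)%N -> XX L.+1 = (4 * XX L)%N.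
Proof.
move=> L0; rewrite /XX /hh.
have -> : (L.+1 - 1 = (L - 1).+1)%N by lia.
by rewrite expnS mulnACA.
Qed.

Lemma exL m : (2 <= m)%N -> exists L, [/\ (0 < L)%N, (2 * XX L <= m)%N & (m < 8 * XX L)%N].
Proof.
elim: m => [//|m IH].
rewrite leq_eqVlt => /orP[/eqP <-|]; first by exists 1%N.
rewrite ltnS => /IH [L [L0 lo hi]].
case: (ltnP m.+1 (8 * XX L)) => h.
  by exists L; split => //; apply: leq_trans lo _.
exists L.+1; rewrite XXS //; split => //; lia.
Qed.

Lemma exp_facts L : (0 < L)%N ->
  [/\ (8 * XX L <= 2 ^ (3 * L))%N, (L * XX L <= 2 ^ (3 * L))%N & (2 ^ L <= 2 * XX L)%N].
Proof.
move=> L0; split.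
- rewrite /XX /hh -expnD (_ : 8 = 2 ^ 3)%N // -expnD leq_pexp2l //; lia.
- apply: (@leq_trans (hh L * XX L)); first by rewrite leq_mul2r L_le_hh // orbT.
  rewrite /XX /hh -!expnD leq_pexp2l //; lia.
- rewrite (_ : 2 ^ L = 2 * hh L)%N; first by rewrite leq_mul2l hh_le_XX.
  by rewrite /hh -expnS; congr (2 ^ _); lia.
Qed.


Section Core.
Local Open Scope ring_scope.
Lemma core (R : realType) L m' (L0 : (0 < L)%N) (Lm : (L + hh L <= m'.+1)%N)
  (beta alpha : R) (s : schedule (L * XX L) m'.+1) :
  0 < alpha -> makespan (psz R L (n := L * XX L)) s <= beta * (hh L)%:R ->
  rank_approx (psz R L (n := L * XX L)) (hh L)%:R (@prf L m' (L * XX L)) s alpha ->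
  L%:R <= 10 * alpha * beta.
Proof.
move=> a0 Hmk hra.
set n := (L * XX L)%N.
set W := (\sum_(0 <= r < L) 2 ^ (L - 1 - r) * rank (@prf L m' n) r.+1 s)%N.
have H1 : (n%:R : R) <= alpha * W%:R.
  rewrite /n -sum_LXX natr_sum /W natr_sum mulr_sumr big_nat_cond [X in _ <= X]big_nat_cond.
  apply: ler_sum => r /andP[/andP[_ rL] _].
  rewrite [X in _ <= alpha * X]natrM [X in X <= _]natrM [X in _ <= X]mulrCA.
  apply: ler_wpM2l; first exact: ler0n.
  apply: le_trans (_ : (maxrank (psz R L (n:=n)) (hh L)%:R (@prf L m' n) r.+1)%:R <= _).
    by rewrite ler_nat; exact: maxrank_lb.
  have := hra r.+1; rewrite ler_pdivrMr // mulrC; exact.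
have M0 : 0 <= beta * (hh L)%:R.
  apply: le_trans Hmk; rewrite /makespan; exact: bigmax_ge_id.
have H2 : (W%:R : R) <= (10 * hh L)%:R * (beta * (hh L)%:R).
  apply: le_trans (_ : ((\sum_(i < m'.+1) phi L i * \sum_(j < n | s j == Some i) Pn L j)%N)%:R <= _).
    by rewrite ler_nat; exact: W_bound.
  rewrite natr_sum.
  apply: le_trans (_ : \sum_(i < m'.+1) (phi L i)%:R * (beta * (hh L)%:R) <= _).
    apply: ler_sum => i _; rewrite natrM; apply: ler_wpM2l; first exact: ler0n.
    rewrite -load_nat; apply: le_trans Hmk; rewrite /makespan.
    by rewrite (bigD1 i) //= le_max lexx.
  rewrite -mulr_suml -natr_sum; apply: ler_wpM2r => //.
  by rewrite ler_nat; exact: Phi_bound.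
have H3 : (n%:R : R) = L%:R * ((hh L)%:R * (hh L)%:R) by rewrite /n /XX !natrM.
have hp : (0 : R) < (hh L)%:R * (hh L)%:R by rewrite mulr_gt0 // ltr0n hh_gt0.
rewrite -(ler_pM2r hp) -H3.
apply: le_trans H1 _.
apply: le_trans (ler_wpM2l (ltW a0) H2) _.
rewrite natrM le_eqVlt; apply/orP; left; apply/eqP; ring.
Qed.

End Core.
End Aux.
Import Aux.

Local Open Scope ring_scope.

Theorem theorem13 (R : realType) :
  exists c : R, 0 < c /\
  exists C : R, 0 < C /\
  forall m : nat, (2 <= m)%N ->
  exists n : nat, (0 < n)%N /\ n%:R <= C * m%:R * ln (m%:R : R) /\
  exists (p : 'I_n -> R) (T : R) (pref : 'I_n -> {perm 'I_m}),
    (forall j, 0 < p j) /\ 0 < T /\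
    forall beta : R, 0 < beta ->
    forall s : schedule n m, makespan p s <= beta * T ->
    (* the rank-approximation factor of s is at least
       c * max(log m, log n) / beta: s is not alpha-approximate
       for any smaller alpha > 0 *)
    forall alpha : R, 0 < alpha ->
      alpha < c * Num.max (ln (m%:R : R)) (ln (n%:R : R)) / beta ->
      ~ rank_approx p T pref s alpha.
Proof.
have l2 : (0 : R) < ln 2 by apply: ln_gt0; rewrite ltr1n.
exists (1 / (30 * ln 2)); split; first by rewrite divr_gt0 // mulr_gt0.
exists (1 / ln 2); split; first by rewrite divr_gt0.
case => [//|m'] m2.
have [L [L0 lo hi]] := exL m2.
have [e1 e2 e3] := exp_facts L0.
have Lm : (L + hh L <= m'.+1)%N.
  apply: leq_trans lo; have := L_le_hh L0; have := hh_le_XX L; lia.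
have lnX k : ln ((2 ^ k)%:R : R) = k%:R * ln 2.
  by rewrite natrX lnXn // mulr_natl.
have lnle a b : (0 < a)%N -> (a <= b)%N -> ln (a%:R : R) <= ln (b%:R : R).
  by move=> a0 ab; rewrite ler_ln ?posrE ?ltr0n ?ler_nat //; apply: leq_trans ab.
have Lln : L%:R * ln 2 <= ln (m'.+1%:R : R).
  rewrite -lnX; apply: lnle; first by rewrite expn_gt0.
  exact: leq_trans e3 lo.
exists (L * XX L)%N; split; first by rewrite muln_gt0 L0 XX_gt0.
split.
  apply: (@le_trans _ _ (L%:R * m'.+1%:R)).
    rewrite -natrM ler_nat leq_mul2l; apply/orP; right; apply: leq_trans lo; lia.
  rewrite mulrAC; apply: ler_wpM2r; first exact: ler0n.
  by rewrite mul1r ler_pdivlMl // mulrC.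
exists (psz R L (n := L * XX L)), (hh L)%:R, (@prf L m' (L * XX L)).
split; first by move=> j; rewrite /psz ltr0n expn_gt0.
split; first by rewrite ltr0n hh_gt0.
move=> beta b0 s Hmk alpha a0 Hal hra.
have Hc := core L0 Lm a0 Hmk hra.
have HM : Num.max (ln (m'.+1%:R : R)) (ln ((L * XX L)%N%:R : R)) <= (3 * L)%N%:R * ln 2.
  rewrite ge_max -lnX; apply/andP; split; apply: lnle => //.
  - lia.
  - by rewrite muln_gt0 L0 XX_gt0.
move: Hal; rewrite ltr_pdivlMr // => Hal.
have : alpha * beta < L%:R / 10.
  apply: lt_le_trans Hal _.
  rewrite -mulrA mulrC ler_pdivlMr ?ltr0n // mulrC mulrA.
  apply: (@le_trans _ _ (1 / (30 * ln 2) * ((3 * L)%N%:R * ln 2) * 10)).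
    by rewrite ler_pM2r ?ltr0n // ler_pM2l ?divr_gt0 ?mulr_gt0 ?ltr0n.
  rewrite natrM le_eqVlt; apply/orP; left; apply/eqP.
  by field; rewrite lt0r_neq0.
move: Hc; lra.
Qed.
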